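(* There exists a two-way optical interference automaton (2OIA) that recognizes the language $\{a^nb^{n^2}\mid n\in\mathbb{N}\}$ in $O(|w|^3)$ time, where $|w|$ is the length of the input $w$.
   Context: A two-way optical interference automaton (2OIA) is a deterministic machine with finite state set $Q$, start state $q_0$, accepting and rejecting states, finite input alphabet $\Sigma$, and tape alphabet $\Gamma=\Sigma\cup\{\text{¢},\$\}$. On input $w=w_1\cdots w_n$ the read-only tape holds ¢$w_1\cdots w_n\$$ in cells $0,1,\dots,n+1$, scanned by a two-way head. For each cell $m$ there is a monochromatic point light source at the point $(m,0)$ of the plane; all sources have the same wavelength $\lambda$ and the same initial amplitude $A_0$, and each source is at any moment either switched off or switched on with initial phase $0$ or $\pi$. A detector is located at a grid point $(j,k)$ with $j,k\in\{0,\tfrac12,1,\tfrac32,\dots,n+1\}$, pointing towards the source array; its field of vision is the cone making angle $\pi/4$ with the vertical line through it, so it sees exactly the sources at $(m,0)$ with $|m-j|\le k$. The resultant wave at the detector is $\sum A_0 r_m^{-1}e^{i(\phi_m+2\pi r_m/\lambda)}$, summed over the switched-on sources it sees, where $r_m$ is the distance from the source to the detector and $\phi_m\in\{0,\pi\}$ the source's phase; the detector outputs $\underline{1}$ if this resultant is nonzero and $\underline{0}$ otherwise. The transition function $\delta:Q\times\Gamma\times\{\underline0,\underline1\}\to Q\times\{\text{left},\text{right},\text{stay}\}\times\{\text{left},\text{right},\text{up},\text{down},\text{stay}\}\times\{\mathrm{toggle}(0),\mathrm{toggle}(\pi),-\}$ maps (state, scanned symbol, detector output) to a new state, a move of the head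 by one cell, a move of the detector by one grid step (of length $1/2$), and an action on the source of the currently scanned cell: $\mathrm{toggle}(\phi)$ switches it on with phase $\phi$ if it is off and switches it off if it is on; $-$ does nothing. Initially all sources are off, the machine is in $q_0$, the head is on cell $0$, and the detector is at a prescribed initial grid position. For a given source, a maximal sequence of toggles at consecutive time steps is called non-transient if its length is odd; there is a constant $k$ such that the machine crashes if it attempts a non-transient toggle sequence on a single source for the $(k+1)$-th time. The machine accepts when it is in an accepting state with detector output $\underline0$. Its running time is the total number of moves made by the head plus the number of moves made by the detector. A 2OIA recognizes a language $L$ if it accepts every input in $L$ and rejects every input not in $L$. *)

(* Defs.v *)
From Stdlib Require Import Bool Reals ZArith List Lia.

Set Implicit Arguments.

Inductive sym : Type := sa | sb.

Inductive tsym : Type := LEnd | REnd | Sym (x : sym).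

Inductive hmove : Type := HLeft | HRight | HStay.
Inductive dmove : Type := DLeft | DRight | DUp | DDown | DStay.
Inductive action : Type := Toggle0 | TogglePi | NoAct.
Inductive srcst : Type := Off | On0 | OnPi.

(** Detector outputs are booleans:
    [false] = 0, [true] = 1.  Positions of the detector are stored in
    half-units: the grid point (j,k) is stored as (J,K) = (2j,2k).
    The prescribed initial detector position (in half-units) is
    [det_dJ * (n+1) + det_cJ], [det_dK * (n+1) + det_cK] with
    [det_dJ, det_dK ∈ {0,1,2}] (i.e. anchored at 0, the middle, or the right
    end / top of the grid) and fixed integer offsets. *)
Record OIA : Type := {
  Q : Type;
  Q_finite : exists l : list Q, forall q, In q l;
  q0 : Q;
  acc : Q -> bool;
  rej : Q -> bool;
  acc_rej_disj : forall q, acc q = true -> rej q = false;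
  delta : Q -> tsym -> bool -> Q * hmove * dmove * action;
  lambda : R;
  lambda_pos : (0 < lambda)%R;
  A0 : R;
  A0_pos : (0 < A0)%R;
  kcrash : nat;
  det_dJ : nat;
  det_dJ_le : (det_dJ <= 2)%nat;
  det_cJ : Z;
  det_dK : nat;
  det_dK_le : (det_dK <= 2)%nat;
  det_cK : Z
}.

(** Tape contents ¢ w $ : cell 0 is ¢, cells 1..n hold w, cell n+1 is $. *)
Definition tape (w : list sym) (m : nat) : tsym :=
  if Nat.eqb m 0 then LEnd
  else if Nat.leb m (length w) then Sym (nth (m - 1) w sa) else REnd.

Record config (M : OIA) : Type := mkcfg {
  st : Q M;
  head : nat;
  detJ : nat;
  detK : nat;
  src : nat -> srcst;
  cnt : nat -> nat;           (* number of completed non-transient toggle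
                                 sequences performed on each source *)
  run : option (nat * nat);   (* toggle sequence in progress: (source, length) *)
  time : nat                  (* head moves + detector moves so far *)
}.
Arguments mkcfg {M}.

Definition phase (s : srcst) : R := match s with OnPi => PI | _ => 0%R end.
Definition is_on (s : srcst) : bool := match s with Off => false | _ => true end.

Definition sees (J K m : nat) : bool :=
  Z.leb (Z.abs (2 * Z.of_nat m - Z.of_nat J)) (Z.of_nat K).

Definition dist (J K m : nat) : R :=
  sqrt (((2 * INR m - INR J) / 2) ^ 2 + (INR K / 2) ^ 2).

Definition rsum (f : nat -> R) (l : list nat) : R :=
  fold_right (fun m acc => (f m + acc)%R) 0%R l.

(** real and imaginary parts of  sum A0 r^-1 exp(i (phi + 2 pi r / lambda))
    over the switched-on sources seen by the detector (cells 0..n+1). *)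
Definition res_re (lam a0 : R) (n J K : nat) (s : nat -> srcst) : R :=
  rsum (fun m => if sees J K m && is_on (s m)
                 then (a0 / dist J K m * cos (phase (s m) + 2 * PI * dist J K m / lam))%R
                 else 0%R) (seq 0 (n + 2)).
Definition res_im (lam a0 : R) (n J K : nat) (s : nat -> srcst) : R :=
  rsum (fun m => if sees J K m && is_on (s m)
                 then (a0 / dist J K m * sin (phase (s m) + 2 * PI * dist J K m / lam))%R
                 else 0%R) (seq 0 (n + 2)).

(** Convention for the degenerate case: a switched-on source located exactly
    at the detector (distance 0, infinite amplitude) makes the output 1. *)
Definition singular (n J K : nat) (s : nat -> srcst) : bool :=
  existsb (fun m => sees J K m && is_on (s m) && Nat.eqb K 0 && Nat.eqb J (2 * m))
          (seq 0 (n + 2)).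

Definition Rneq0b (x : R) : bool := if Req_EM_T x 0 then false else true.

Definition output (M : OIA) (n : nat) (c : config M) : bool :=
  singular n (detJ c) (detK c) (src c)
  || Rneq0b (res_re (lambda M) (A0 M) n (detJ c) (detK c) (src c))
  || Rneq0b (res_im (lambda M) (A0 M) n (detJ c) (detK c) (src c)).

Definition toggle (a : action) (s : srcst) : srcst :=
  match a, s with
  | NoAct, _ => s
  | Toggle0, Off => On0
  | TogglePi, Off => OnPi
  | _, _ => Off
  end.

Definition upd {A : Type} (f : nat -> A) (m : nat) (v : A) : nat -> A :=
  fun x => if Nat.eqb x m then v else f x.

(** A maximal toggle sequence (m, l) ends: if l is odd it is non-transient
    and is counted; the (k+1)-th one on the same source crashes (None). *)
Definition end_run (k : nat) (ct : nat -> nat) (r : option (nat * nat))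
  : option (nat -> nat) :=
  match r with
  | None => Some ct
  | Some (m, l) =>
      if Nat.odd l then
        if Nat.leb (S (ct m)) k then Some (upd ct m (S (ct m))) else None
      else Some ct
  end.

Definition move_head (n h : nat) (hm : hmove) : option nat :=
  match hm with
  | HLeft => match h with 0 => None | S h' => Some h' end
  | HRight => if Nat.ltb h (S n) then Some (S h) else None
  | HStay => Some h
  end.

Definition move_det (n J K : nat) (dm : dmove) : option (nat * nat) :=
  match dm with
  | DLeft => match J with 0 => None | S J' => Some (J', K) end
  | DRight => if Nat.ltb J (2 * (n + 1)) then Some (S J, K) else None
  | DDown => match K with 0 => None | S K' => Some (J, K') end
  | DUp => if Nat.ltb K (2 * (n + 1)) then Some (J, S K) else None
  | DStay => Some (J, K)
  end.

Definition halted (M : OIA) (c : config M) : bool := acc M (st c) || rej M (st c).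

Definition is_toggle (a : action) : bool :=
  match a with NoAct => false | _ => true end.

Definition step (M : OIA) (w : list sym) (c : config M) : option (config M) :=
  if halted c then Some c else
  let n := length w in
  let h := head c in
  match delta M (st c) (tape w h) (output n c) with
  | (q', hm, dm, a) =>
    let bk :=
      if is_toggle a then
        match run c with
        | Some (m, l) =>
            if Nat.eqb m h then (Some (cnt c), Some (m, S l))
            else (end_run (kcrash M) (cnt c) (run c), Some (h, 1))
        | None => (Some (cnt c), Some (h, 1))
        end
      else (end_run (kcrash M) (cnt c) (run c), None) in
    match bk with
    | (None, _) => None
    | (Some ct', run') =>
      match move_head n h hm, move_det n (detJ c) (detK c) dm with
      | Some h', Some (J', K') =>
          Some (mkcfg q' h' J' K' (upd (src c) h (toggle a (src c h))) ct' run'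
                  (time c + (match hm with HStay => 0 | _ => 1 end)
                          + (match dm with DStay => 0 | _ => 1 end)))
      | _, _ => None
      end
    end
  end.

Definition init (M : OIA) (w : list sym) : option (config M) :=
  let n := length w in
  let J := (Z.of_nat (det_dJ M * (n + 1)) + det_cJ M)%Z in
  let K := (Z.of_nat (det_dK M * (n + 1)) + det_cK M)%Z in
  if (Z.leb 0 J && Z.leb J (Z.of_nat (2 * (n + 1)))
      && Z.leb 0 K && Z.leb K (Z.of_nat (2 * (n + 1))))%bool
  then Some (mkcfg (q0 M) 0 (Z.to_nat J) (Z.to_nat K) (fun _ => Off) (fun _ => 0) None 0)
  else None.

Fixpoint run_steps (M : OIA) (w : list sym) (t : nat) : option (config M) :=
  match t with
  | 0 => init M w
  | S t' => match run_steps M w t' with Some c => step w c | None => None end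
  end.

Definition final (M : OIA) (w : list sym) (c : config M) : Prop :=
  exists t, run_steps M w t = Some c /\ halted c = true.

(** the pending toggle sequence also ends when the machine halts *)
Definition no_final_crash (M : OIA) (c : config M) : Prop :=
  exists ct, end_run (kcrash M) (cnt c) (run c) = Some ct.

Definition accepts (M : OIA) (w : list sym) : Prop :=
  exists c : config M, final w c /\ no_final_crash c /\
            acc M (st c) = true /\ output (length w) c = false.

Definition rejects (M : OIA) (w : list sym) : Prop :=
  exists c : config M, final w c /\ no_final_crash c /\
            (acc M (st c) = false \/ output (length w) c = true).

Definition recognizes (M : OIA) (L : list sym -> Prop) : Prop :=
  forall w, (L w -> accepts M w) /\ (~ L w -> rejects M w).

Definition runs_within (M : OIA) (w : list sym) (T : nat) : Prop :=
  exists c : config M, final w c /\ time c <= T.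

Definition L_anbn2 (w : list sym) : Prop :=
  exists n : nat, w = repeat sa n ++ repeat sb (n * n).

(* Main.v *)
From Stdlib Require Import Reals ZArith List Lia Bool.
Require Import Defs.
Import ListNotations.

Inductive qs : Type :=
 | qP0 | qP1 | qP2 | qP3 | qR0h | qR1 | qBw | qBwh | qBl | qX | qSk | qSkh
 | qM1 | qM2 | qCc | qC2 | qDd | qEh | qEw | qEl | qTt | qTh | qGw | qGh
 | qFw | qFh | qAcc | qRej.

Definition qs_all : list qs :=
 [qP0; qP1; qP2; qP3; qR0h; qR1; qBw; qBwh; qBl; qX; qSk; qSkh;
  qM1; qM2; qCc; qC2; qDd; qEh; qEw; qEl; qTt; qTh; qGw; qGh;
  qFw; qFh; qAcc; qRej].

Lemma qs_fin : exists l : list qs, forall x, In x l.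
Proof. exists qs_all; intro x; destruct x; simpl; tauto. Qed.

Definition accf (x : qs) : bool := match x with qAcc => true | _ => false end.
Definition rejf (x : qs) : bool := match x with qRej => true | _ => false end.

Lemma accrej : forall x, accf x = true -> rejf x = false.
Proof. intro x; destruct x; simpl; congruence. Qed.

Definition rj : qs * hmove * dmove * action := (qRej, HStay, DStay, NoAct).

Definition dl (x : qs) (s : tsym) (o : bool) : qs * hmove * dmove * action :=
  match x with
  | qP0 => (qP1, HRight, DStay, NoAct)
  | qP1 => match s with
           | Sym sa => (qP1, HRight, DStay, Toggle0)
           | Sym sb => (qP2, HRight, DStay, NoAct)
           | REnd => (qP3, HLeft, DStay, NoAct)
           | LEnd => rj end
  | qP2 => match s with
           | Sym sb => (qP2, HRight, DStay, NoAct)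
           | REnd => (qP3, HLeft, DStay, NoAct)
           | _ => rj end
  | qP3 => match s with
           | LEnd => (qR0h, HRight, DRight, NoAct)
           | _ => (qP3, HLeft, DStay, NoAct) end
  | qR0h => (qR1, HStay, DRight, NoAct)
  | qR1 => if o then (qBw, HStay, DStay, NoAct) else (qFw, HStay, DStay, NoAct)
  | qBw => match s, o with
           | REnd, _ => (qBl, HLeft, DLeft, NoAct)
           | Sym sb, true => (qBl, HLeft, DLeft, NoAct)
           | _, _ => (qBwh, HRight, DRight, NoAct) end
  | qBwh => (qBw, HStay, DRight, NoAct)
  | qBl => (qX, HStay, DLeft, NoAct)
  | qX => match s with Sym sb => (qSk, HStay, DStay, NoAct) | _ => rj end
  | qSk => if o then match s with Sym sb => (qM1, HLeft, DStay, Toggle0) | _ => rj end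
           else (qSkh, HStay, DLeft, NoAct)
  | qSkh => (qSk, HStay, DLeft, NoAct)
  | qM1 => (qM2, HStay, DLeft, NoAct)
  | qM2 => (qCc, HStay, DLeft, NoAct)
  | qCc => if o then match s with Sym sb => (qC2, HLeft, DStay, Toggle0) | _ => rj end
           else (qDd, HStay, DStay, NoAct)
  | qC2 => match s with Sym sb => (qM1, HLeft, DStay, Toggle0) | _ => rj end
  | qDd => match s with
           | LEnd => (qEh, HRight, DRight, NoAct)
           | _ => (qDd, HLeft, DStay, NoAct) end
  | qEh => (qEw, HStay, DRight, NoAct)
  | qEw => match s, o with
           | Sym sa, true => (qEh, HRight, DRight, NoAct)
           | _, _ => (qEl, HLeft, DLeft, NoAct) end
  | qEl => (qTt, HStay, DLeft, NoAct)
  | qTt => (qTh, HLeft, DLeft, Toggle0)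
  | qTh => (qGw, HStay, DLeft, NoAct)
  | qGw => match s with
           | LEnd => (qR0h, HRight, DRight, NoAct)
           | _ => (qGh, HLeft, DLeft, NoAct) end
  | qGh => (qGw, HStay, DLeft, NoAct)
  | qFw => match s, o with
           | Sym sa, _ => (qFh, HRight, DRight, NoAct)
           | Sym sb, true => (qFh, HRight, DRight, NoAct)
           | REnd, _ => (qAcc, HStay, DStay, NoAct)
           | _, _ => rj end
  | qFh => (qFw, HStay, DRight, NoAct)
  | qAcc => (qAcc, HStay, DStay, NoAct)
  | qRej => rj
  end.

Definition Mach : OIA := {|
  Q := qs; Q_finite := qs_fin; q0 := qP0; acc := accf; rej := rejf;
  acc_rej_disj := accrej; delta := dl;
  lambda := 1%R; lambda_pos := Rlt_0_1; A0 := 1%R; A0_pos := Rlt_0_1;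
  kcrash := 2;
  det_dJ := 0; det_dJ_le := le_0_n 2; det_cJ := 0%Z;
  det_dK := 0; det_dK_le := le_0_n 2; det_cK := 0%Z |}.

Definition pend (r : option (nat*nat)) (m : nat) : nat :=
  match r with Some (m', l) => if Nat.eqb m m' then l else 0 | None => 0 end.

Definition good (c : config Mach) (x : qs) (h J : nat) (Mk : nat -> bool) (E : nat -> nat) : Prop :=
  st c = x /\ head c = h /\ detJ c = J /\ detK c = 0 /\
  (forall m, src c m = if Mk m then On0 else Off) /\
  (forall m, cnt c m + pend (run c) m = E m) /\
  (run c = None \/ exists m, run c = Some (m, 1) /\ m <> h) /\
  (forall m, E m <= 2).

Definition haltq (x : qs) : bool := accf x || rejf x.

Lemma step_noact w c x h J Mk E x' hm dm h' J' :
  good c x h J Mk E -> haltq x = false ->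
  dl x (tape w h) (output (length w) c) = (x', hm, dm, NoAct) ->
  move_head (length w) h hm = Some h' ->
  move_det (length w) J 0 dm = Some (J', 0) ->
  exists c', step w c = Some c' /\ good c' x' h' J' Mk E.
Proof.
  intros (Hst & Hh & HJ & HK & Hsrc & Hcnt & Hrun & HE) Hq Hd Hmh Hmd.
  unfold step.
  assert (Hh0 : halted c = false) by (unfold halted; rewrite Hst; exact Hq).
  rewrite Hh0. cbv zeta. change (delta Mach) with dl. rewrite Hst, Hh, Hd.
  simpl is_toggle. cbv iota beta.
  destruct Hrun as [Hr | (m & Hr & Hm)].
  - rewrite Hr. simpl end_run. rewrite Hmh, HJ, HK, Hmd.
    eexists; split; [reflexivity|].
    unfold good; simpl; repeat split; auto.
    + intro m. unfold upd. destruct (Nat.eqb_spec m h); subst; simpl; auto.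
    + intro m. rewrite <- (Hcnt m), Hr. simpl. lia.
  - rewrite Hr. unfold end_run. simpl Nat.odd. cbv iota.
    assert (Hle : Nat.leb (S (cnt c m)) (kcrash Mach) = true).
    { apply Nat.leb_le. simpl. specialize (Hcnt m). rewrite Hr in Hcnt. simpl in Hcnt.
      rewrite Nat.eqb_refl in Hcnt. specialize (HE m). lia. }
    rewrite Hle. rewrite Hmh, HJ, HK, Hmd.
    eexists; split; [reflexivity|].
    unfold good; simpl; repeat split; auto.
    + intro m'. unfold upd. destruct (Nat.eqb_spec m' h); subst; simpl; auto.
    + intro m'. rewrite <- (Hcnt m'), Hr. simpl. unfold upd.
      destruct (Nat.eqb_spec m' m); subst; simpl; lia.
Qed.

Lemma step_tog w c x h J Mk E x' hm dm h' J' :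
  good c x h J Mk E -> haltq x = false ->
  dl x (tape w h) (output (length w) c) = (x', hm, dm, Toggle0) ->
  move_head (length w) h hm = Some h' ->
  move_det (length w) J 0 dm = Some (J', 0) ->
  h' <> h -> E h <= 1 ->
  exists c', step w c = Some c' /\
    good c' x' h' J' (fun m => if Nat.eqb m h then negb (Mk h) else Mk m)
                     (fun m => if Nat.eqb m h then S (E h) else E m).
Proof.
  intros (Hst & Hh & HJ & HK & Hsrc & Hcnt & Hrun & HE) Hq Hd Hmh Hmd Hne Heh.
  unfold step.
  assert (Hh0 : halted c = false) by (unfold halted; rewrite Hst; exact Hq).
  rewrite Hh0. cbv zeta. change (delta Mach) with dl. rewrite Hst, Hh, Hd.
  simpl is_toggle. cbv iota beta.
  destruct Hrun as [Hr | (m & Hr & Hm)].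
  - rewrite Hr. rewrite Hmh, HJ, HK, Hmd.
    eexists; split; [reflexivity|].
    unfold good; simpl; repeat split; auto.
    + intro m. unfold upd. destruct (Nat.eqb_spec m h); [subst m|]; simpl; auto.
      rewrite Hsrc. destruct (Mk h); reflexivity.
    + intro m. pose proof (Hcnt m) as H1. rewrite Hr in H1. simpl in H1. simpl.
      destruct (Nat.eqb m h) eqn:Emh; [apply Nat.eqb_eq in Emh; subst m|]; simpl; lia.
    + right; exists h; split; auto.
    + intro m. destruct (Nat.eqb_spec m h); auto. lia.
  - rewrite Hr.
    destruct (Nat.eqb_spec m h) as [e|_]; [congruence|].
    unfold end_run. simpl Nat.odd. cbv iota.
    assert (Hle : Nat.leb (S (cnt c m)) (kcrash Mach) = true).
    { apply Nat.leb_le. simpl. specialize (Hcnt m). rewrite Hr in Hcnt. simpl in Hcnt.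
      rewrite Nat.eqb_refl in Hcnt. specialize (HE m). lia. }
    rewrite Hle. rewrite Hmh, HJ, HK, Hmd.
    eexists; split; [reflexivity|].
    unfold good; simpl; repeat split; auto.
    + intro m'. unfold upd. destruct (Nat.eqb_spec m' h); [subst m'|]; simpl; auto.
      rewrite Hsrc. destruct (Mk h); reflexivity.
    + intro m'. pose proof (Hcnt m') as H1. rewrite Hr in H1. simpl in H1. unfold upd.
      pose proof (Hcnt h) as H2. rewrite Hr in H2. simpl in H2.
      assert (Hhm : (h =? m) = false) by (apply Nat.eqb_neq; congruence).
      rewrite Hhm in H2.
      destruct (Nat.eqb m' m) eqn:E1; destruct (Nat.eqb m' h) eqn:E2; simpl in *; try lia.
      all: repeat match goal with H : (_ =? _) = true |- _ => apply Nat.eqb_eq in H; subst end.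
      all: try rewrite Nat.eqb_refl in *; try congruence.
      all: lia.
    + right; exists h; split; auto.
    + intro m'. destruct (Nat.eqb_spec m' h); auto. lia.
Qed.

Lemma sees_0 m m' : sees (2 * m) 0 m' = Nat.eqb m' m.
Proof.
  unfold sees. destruct (Nat.eqb_spec m' m).
  - apply Z.leb_le. subst. lia.
  - apply Z.leb_gt. lia.
Qed.

Lemma rsum_zero f l : (forall x, In x l -> f x = 0%R) -> rsum f l = 0%R.
Proof.
  induction l as [|a l IH]; simpl; intros H; auto.
  rewrite H by auto. rewrite IH by auto. ring.
Qed.

Lemma Rneq0b_0 : Rneq0b 0 = false.
Proof. unfold Rneq0b. destruct (Req_EM_T 0 0); auto. congruence. Qed.

Lemma output_at n c x h m Mk E :
  good c x h (2 * m) Mk E -> m <= n + 1 -> output n c = Mk m.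
Proof.
  intros (Hst & Hh & HJ & HK & Hsrc & _) Hm.
  unfold output. rewrite HJ, HK.
  destruct (Mk m) eqn:Em.
  - assert (Hs : singular n (2 * m) 0 (src c) = true).
    { unfold singular. apply existsb_exists. exists m. split.
      - apply in_seq. lia.
      - rewrite sees_0, Nat.eqb_refl, Hsrc, Em. simpl. apply Nat.eqb_refl. }
    rewrite Hs. reflexivity.
  - assert (Hs : singular n (2 * m) 0 (src c) = false).
    { unfold singular. destruct (existsb _ _) eqn:Ex; auto.
      apply existsb_exists in Ex. destruct Ex as (m' & _ & Hf).
      rewrite sees_0 in Hf. destruct (Nat.eqb_spec m' m); simpl in Hf; try discriminate.
      subst. rewrite Hsrc, Em in Hf. discriminate. }
    rewrite Hs. unfold res_re, res_im.
    rewrite !rsum_zero. rewrite Rneq0b_0. reflexivity.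
    all: intros m' _; rewrite sees_0; destruct (Nat.eqb_spec m' m); simpl; auto;
      subst; rewrite Hsrc, Em; reflexivity.
Qed.

Lemma good_ext c x h J Mk E Mk' E' :
  good c x h J Mk E -> (forall m, Mk m = Mk' m) -> (forall m, E m = E' m) ->
  good c x h J Mk' E'.
Proof.
  intros (Hst & Hh & HJ & HK & Hsrc & Hcnt & Hrun & HE) H1 H2.
  repeat split; auto.
  - intro m; rewrite <- H1; auto.
  - intro m; rewrite <- H2; auto.
  - intro m; rewrite <- H2; auto.
Qed.

Lemma good_nfc c x h J Mk E : good c x h J Mk E -> no_final_crash c.
Proof.
  intros (Hst & Hh & HJ & HK & Hsrc & Hcnt & Hrun & HE).
  unfold no_final_crash. destruct Hrun as [Hr | (m & Hr & _)]; rewrite Hr; unfold end_run.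
  - eexists; reflexivity.
  - simpl Nat.odd. cbv iota. change (kcrash Mach) with 2.
    assert (Hle : Nat.leb (S (cnt c m)) 2 = true).
    { apply Nat.leb_le. specialize (Hcnt m). rewrite Hr in Hcnt. simpl in Hcnt.
      rewrite Nat.eqb_refl in Hcnt. specialize (HE m). lia. }
    rewrite Hle. eexists; reflexivity.
Qed.

Section Steps.
Variable w : list sym.

Fixpoint steps (c : config Mach) (t : nat) : option (config Mach) :=
  match t with
  | 0 => Some c
  | S t' => match step w c with Some c1 => steps c1 t' | None => None end
  end.

Lemma steps_S c c1 t c' : step w c = Some c1 -> steps c1 t = Some c' -> steps c (S t) = Some c'.
Proof. intros H1 H2. simpl. rewrite H1. exact H2. Qed.

Lemma steps_add c t1 c1 t2 c2 :
  steps c t1 = Some c1 -> steps c1 t2 = Some c2 -> steps c (t1 + t2) = Some c2.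
Proof.
  revert c; induction t1 as [|t1 IH]; intros c H1 H2; simpl in *.
  - congruence.
  - destruct (step w c) eqn:E; try discriminate. eauto.
Qed.

Lemma run_steps_add t1 c t2 c' :
  run_steps Mach w t1 = Some c -> steps c t2 = Some c' -> run_steps Mach w (t1 + t2) = Some c'.
Proof.
  revert t1 c; induction t2 as [|t2 IH]; intros t1 c H1 H2; simpl in *.
  - rewrite Nat.add_0_r. congruence.
  - destruct (step w c) eqn:E; try discriminate.
    replace (t1 + S t2) with (S t1 + t2) by lia.
    apply IH with c0; auto. simpl. rewrite H1. exact E.
Qed.

Lemma step_time (c c' : config Mach) : step w c = Some c' -> time c' <= time c + 2.
Proof.
  unfold step. destruct (halted c).
  - intros H; injection H; intros; subst; lia.
  - cbv zeta. destruct (delta Mach (st c) (tape w (head c)) (output (length w) c))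
      as [[[q' hm] dm] a].
    match goal with |- (match ?b with _ => _ end) = _ -> _ => destruct b as [[ct'|] r'] end;
      try discriminate.
    destruct (move_head (length w) (head c) hm); try discriminate.
    destruct (move_det (length w) (detJ c) (detK c) dm) as [[J' K']|]; try discriminate.
    intros H; injection H; intros; subst; simpl.
    destruct hm, dm; simpl; lia.
Qed.

Lemma run_time t (c : config Mach) : run_steps Mach w t = Some c -> time c <= 2 * t.
Proof.
  revert c; induction t as [|t IH]; intros c H; simpl in H.
  - unfold init in H. simpl in H. destruct (_ && _)%bool; inversion H; subst; simpl; lia.
  - destruct (run_steps Mach w t) eqn:E; try discriminate.
    apply step_time in H. specialize (IH c0 eq_refl). lia.
Qed.

End Steps.

Lemma nth_rep_app (x d : sym) p u i :
  nth i (repeat x p ++ u) d = if i <? p then x else nth (i - p) u d.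
Proof.
  revert i; induction p as [|p IH]; intros i; simpl.
  - rewrite Nat.sub_0_r. reflexivity.
  - destruct i; simpl; auto.
Qed.

Lemma mh_right n h : h <= n -> move_head n h HRight = Some (S h).
Proof. intros H. unfold move_head. replace (h <? S n) with true; [reflexivity|symmetry; apply Nat.ltb_lt; lia]. Qed.
Lemma mh_left n h h' : h = S h' -> move_head n h HLeft = Some h'.
Proof. intros ->. reflexivity. Qed.
Lemma mh_stay n h : move_head n h HStay = Some h.
Proof. reflexivity. Qed.
Lemma md_right n J : J < 2 * (n + 1) -> move_det n J 0 DRight = Some (S J, 0).
Proof. intros H. unfold move_det. replace (J <? 2 * (n + 1)) with true; [reflexivity|symmetry; apply Nat.ltb_lt; lia]. Qed.
Lemma md_left n J J' : J = S J' -> move_det n J 0 DLeft = Some (J', 0).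
Proof. intros ->. reflexivity. Qed.
Lemma md_stay n J : move_det n J 0 DStay = Some (J, 0).
Proof. reflexivity. Qed.

Section Tape.
Variables (w : list sym) (p q : nat) (v : list sym).
Hypothesis Hw : w = repeat sa p ++ repeat sb q ++ v.

Lemma len_w : length w = p + q + length v.
Proof. rewrite Hw, !length_app, !repeat_length. lia. Qed.

Lemma tape_0 : tape w 0 = LEnd.
Proof. reflexivity. Qed.

Lemma tape_a m : 1 <= m <= p -> tape w m = Sym sa.
Proof.
  intros H. unfold tape. pose proof len_w.
  destruct (Nat.eqb_spec m 0); [lia|]. destruct (Nat.leb_spec m (length w)); [|lia].
  rewrite Hw, nth_rep_app. destruct (Nat.ltb_spec (m - 1) p); auto; lia.
Qed.

Lemma tape_b m : p < m <= p + q -> tape w m = Sym sb.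
Proof.
  intros H. unfold tape. pose proof len_w.
  destruct (Nat.eqb_spec m 0); [lia|]. destruct (Nat.leb_spec m (length w)); [|lia].
  rewrite Hw, nth_rep_app. destruct (Nat.ltb_spec (m - 1) p); [lia|].
  rewrite nth_rep_app. destruct (Nat.ltb_spec (m - 1 - p) q); auto; lia.
Qed.

Lemma tape_end : tape w (p + q + 1) = match v with [] => REnd | y :: _ => Sym y end.
Proof.
  unfold tape. pose proof len_w.
  destruct (Nat.eqb_spec (p + q + 1) 0); [lia|].
  destruct v as [|y v'] eqn:Ev.
  - simpl in H. destruct (Nat.leb_spec (p + q + 1) (length w)); [lia|]. reflexivity.
  - simpl in H. destruct (Nat.leb_spec (p + q + 1) (length w)); [|lia].
    rewrite Hw, nth_rep_app. destruct (Nat.ltb_spec (p + q + 1 - 1) p); [lia|].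
    rewrite nth_rep_app. destruct (Nat.ltb_spec (p + q + 1 - 1 - p) q); [lia|].
    replace (p + q + 1 - 1 - p - q) with 0 by lia. reflexivity.
Qed.

End Tape.

Lemma tape_notL w h : tape w (S h) <> LEnd.
Proof. unfold tape. simpl. destruct (match length w with 0 => false | S m' => h <=? m' end); intro H; discriminate. Qed.

Lemma init_good w : exists c0, run_steps Mach w 0 = Some c0 /\
  good c0 qP0 0 0 (fun _ => false) (fun _ => 0).
Proof.
  simpl. unfold init. simpl.
  match goal with |- context [if ?b then _ else _] => replace b with true end.
  - eexists; split; [reflexivity|]. repeat split; simpl; auto; lia.
  - symmetry. repeat (apply andb_true_intro; split); apply Z.leb_le; lia.
Qed.

Definition S1 (i m : nat) : bool := (1 <=? m) && (m <=? i).
Definition E1 (i m : nat) : nat := if S1 i m then 1 else 0.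

Ltac bsolve := unfold E1, S1; intros;
  repeat match goal with
  | |- context [Nat.eqb ?a ?b] => destruct (Nat.eqb_spec a b)
  | |- context [Nat.leb ?a ?b] => destruct (Nat.leb_spec a b)
  | |- context [Nat.ltb ?a ?b] => destruct (Nat.ltb_spec a b)
  end; simpl; try reflexivity; try lia.

Section Ph1.
Variables (w : list sym) (p q : nat) (v : list sym).
Hypothesis Hw : w = repeat sa p ++ repeat sb q ++ v.
Hypothesis Hv : v = [] \/ (1 <= q /\ exists v', v = sa :: v').

Lemma ph_P1 : forall d i c, i + d = p + 1 -> 1 <= i ->
  good c qP1 i 0 (S1 (i - 1)) (E1 (i - 1)) ->
  exists c', steps w c d = Some c' /\ good c' qP1 (p + 1) 0 (S1 p) (E1 p).
Proof.
  induction d as [|d IH]; intros i c Hd Hi Hg.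
  - exists c; split; [reflexivity|]. replace i with (p + 1) in Hg by lia.
    eapply good_ext; [exact Hg| |]; bsolve.
  - pose proof (len_w _ _ _ _ Hw) as Hl.
    edestruct (step_tog w c) as (c2 & Hs & Hg2);
      [exact Hg | reflexivity | rewrite (tape_a _ _ _ _ Hw) by lia; reflexivity
      | apply mh_right; lia | apply md_stay | lia | unfold E1, S1; bsolve | ].
    destruct (IH (S i) c2) as (c' & Hs' & Hg'); [lia|lia| |].
    + eapply good_ext; [exact Hg2| |]; bsolve.
    + exists c'; split; auto. eapply steps_S; eauto.
Qed.

End Ph1.

Lemma ph_P3 w : forall h c Mk E, good c qP3 h 0 Mk E ->
  exists c', steps w c (h + 2) = Some c' /\ good c' qR1 1 2 Mk E.
Proof.
  induction h as [|h IH]; intros c Mk E Hg.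
  - edestruct (step_noact w c) as (c2 & Hs & Hg2);
      [exact Hg | reflexivity | reflexivity | apply mh_right; lia | apply md_right; lia | ].
    edestruct (step_noact w c2) as (c3 & Hs3 & Hg3);
      [exact Hg2 | reflexivity | reflexivity | apply mh_stay | apply md_right; lia | ].
    exists c3; split; auto. eapply steps_S; [eauto|]. eapply steps_S; [eauto|]. reflexivity.
  - edestruct (step_noact w c) as (c2 & Hs & Hg2);
      [exact Hg | reflexivity
      | pose proof (tape_notL w h); destruct (tape w (S h)) as [| |[]]; [congruence| | |]; reflexivity
      | apply mh_left; reflexivity | apply md_stay | ].
    destruct (IH c2 Mk E Hg2) as (c' & Hs' & Hg').
    exists c'; split; auto. eapply steps_S; eauto.
Qed.

Section Ph1b.
Variables (w : list sym) (p q : nat) (v : list sym).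
Hypothesis Hw : w = repeat sa p ++ repeat sb q ++ v.
Hypothesis Hv : v = [] \/ (1 <= q /\ exists v', v = sa :: v').

Lemma ph_P2 : forall d i c Mk E, i + d = p + q + 1 -> p + 1 < i ->
  good c qP2 i 0 Mk E ->
  exists c', steps w c d = Some c' /\ good c' qP2 (p + q + 1) 0 Mk E.
Proof.
  induction d as [|d IH]; intros i c Mk E Hd Hi Hg.
  - exists c; split; [reflexivity|]. replace (p + q + 1) with i by lia. exact Hg.
  - pose proof (len_w _ _ _ _ Hw) as Hl.
    edestruct (step_noact w c) as (c2 & Hs & Hg2);
      [exact Hg | reflexivity | rewrite (tape_b _ _ _ _ Hw) by lia; reflexivity
      | apply mh_right; lia | apply md_stay | ].
    destruct (IH (S i) c2 Mk E) as (c' & Hs' & Hg'); [lia|lia|auto|].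
    exists c'; split; auto. eapply steps_S; eauto.
Qed.

Lemma phase1 c0 : good c0 qP0 0 0 (fun _ => false) (fun _ => 0) ->
  (v = [] -> exists t c', t <= 2 * p + 2 * q + 6 /\ steps w c0 t = Some c' /\
      good c' qR1 1 2 (S1 p) (E1 p)) /\
  (v <> [] -> exists t c', t <= 2 * p + 2 * q + 6 /\ steps w c0 t = Some c' /\
      st c' = qRej /\ no_final_crash c').
Proof.
  intros Hg0. pose proof (len_w _ _ _ _ Hw) as Hl.
  edestruct (step_noact w c0) as (c1 & Hs1 & Hg1);
    [exact Hg0 | reflexivity | reflexivity | apply mh_right; lia | apply md_stay | ].
  destruct (ph_P1 w p q v Hw Hv p 1 c1) as (c2 & Hs2 & Hg2); [lia|lia| |].
  { eapply good_ext; [exact Hg1| |]; bsolve. }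
  assert (H12 : steps w c0 (1 + p) = Some c2) by (eapply steps_S; eauto).
  destruct (Nat.eq_dec q 0) as [Hq0|Hq0].
  - assert (Hv0 : v = []) by (destruct Hv as [|(? & _)]; auto; lia).
    assert (Ht : tape w (p + 1) = REnd).
    { pose proof (tape_end _ _ _ _ Hw) as T. rewrite Hv0 in T. replace (p + 1) with (p + q + 1) by lia; exact T. }
    split; [|intro; congruence]. intros _.
    edestruct (step_noact w c2) as (c3 & Hs3 & Hg3);
      [exact Hg2 | reflexivity | rewrite Ht; reflexivity | apply mh_left with (h' := p); lia
      | apply md_stay | ].
    destruct (ph_P3 w p c3 _ _ Hg3) as (c4 & Hs4 & Hg4).
    exists (1 + p + S (p + 2)), c4. split; [lia|]. split; auto.
    eapply steps_add; [exact H12|]. eapply steps_S; eauto.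
  - edestruct (step_noact w c2) as (c3 & Hs3 & Hg3);
      [exact Hg2 | reflexivity | rewrite (tape_b _ _ _ _ Hw) by lia; reflexivity
      | apply mh_right; lia | apply md_stay | ].
    destruct (ph_P2 (q - 1) (S (p + 1)) c3 _ _ ltac:(lia) ltac:(lia) Hg3) as (c4 & Hs4 & Hg4).
    assert (H14 : steps w c0 (1 + p + q) = Some c4).
    { eapply steps_add; [exact H12|]. replace q with (S (q - 1)) by lia. eapply steps_S; eauto. }
    pose proof (tape_end _ _ _ _ Hw) as T.
    split.
    + intros Hv0. rewrite Hv0 in T.
      edestruct (step_noact w c4) as (c5 & Hs5 & Hg5);
        [exact Hg4 | reflexivity | rewrite T; reflexivity
        | apply mh_left with (h' := p + q); lia | apply md_stay | ].
      destruct (ph_P3 w _ c5 _ _ Hg5) as (c6 & Hs6 & Hg6).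
      exists (1 + p + q + S (p + q + 2)), c6. split; [lia|]. split; auto.
      eapply steps_add; [exact H14|]. eapply steps_S; eauto.
    + intros Hvn. destruct Hv as [|(_ & v' & Hv')]; [congruence|]. rewrite Hv' in T.
      edestruct (step_noact w c4) as (c5 & Hs5 & Hg5);
        [exact Hg4 | reflexivity | rewrite T; reflexivity
        | apply mh_stay | apply md_stay | ].
      exists (1 + p + q + 1), c5. split; [lia|]. split.
      * eapply steps_add; [exact H14|]. eapply steps_S; eauto.
      * split; [apply Hg5|]. eapply good_nfc; eauto.
Qed.

End Ph1b.

Ltac bdestr := repeat match goal with
  | |- context [Nat.eqb ?a ?b] => destruct (Nat.eqb_spec a b)
  | |- context [Nat.leb ?a ?b] => destruct (Nat.leb_spec a b)
  | |- context [Nat.ltb ?a ?b] => destruct (Nat.ltb_spec a b)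
  end; simpl; intros; try discriminate; try reflexivity; try lia.

Lemma ph_Gen (w : list sym) (xa xb : qs) (Hxa : haltq xa = false) (Hxb : haltq xb = false)
  (Ha : forall s o, dl xa s o = match s with LEnd => (xb, HRight, DStay, NoAct) | _ => (xa, HLeft, DStay, NoAct) end)
  : True.
Proof. exact I. Qed.

Lemma ph_D w : forall h c Mk E, good c qDd h 0 Mk E ->
  exists c', steps w c (h + 2) = Some c' /\ good c' qEw 1 2 Mk E.
Proof.
  induction h as [|h IH]; intros c Mk E Hg.
  - edestruct (step_noact w c) as (c2 & Hs & Hg2);
      [exact Hg | reflexivity | reflexivity | apply mh_right; lia | apply md_right; lia | ].
    edestruct (step_noact w c2) as (c3 & Hs3 & Hg3);
      [exact Hg2 | reflexivity | reflexivity | apply mh_stay | apply md_right; lia | ].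
    exists c3; split; auto. eapply steps_S; [eauto|]. eapply steps_S; [eauto|]. reflexivity.
  - edestruct (step_noact w c) as (c2 & Hs & Hg2);
      [exact Hg | reflexivity
      | pose proof (tape_notL w h); destruct (tape w (S h)) as [| |[]]; [congruence| | |]; reflexivity
      | apply mh_left; reflexivity | apply md_stay | ].
    destruct (IH c2 Mk E Hg2) as (c' & Hs' & Hg').
    exists c'; split; auto. eapply steps_S; eauto.
Qed.

Lemma ph_G w : forall j c Mk E, good c qGw j (2 * j) Mk E ->
  exists c', steps w c (2 * j + 2) = Some c' /\ good c' qR1 1 2 Mk E.
Proof.
  induction j as [|j IH]; intros c Mk E Hg.
  - edestruct (step_noact w c) as (c2 & Hs & Hg2);
      [exact Hg | reflexivity | reflexivity | apply mh_right; lia | apply md_right; lia | ].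
    edestruct (step_noact w c2) as (c3 & Hs3 & Hg3);
      [exact Hg2 | reflexivity | reflexivity | apply mh_stay | apply md_right; lia | ].
    exists c3; split; auto. eapply steps_S; [eauto|]. eapply steps_S; [eauto|]. reflexivity.
  - edestruct (step_noact w c) as (c2 & Hs & Hg2);
      [exact Hg | reflexivity
      | pose proof (tape_notL w j); destruct (tape w (S j)) as [| |[]]; [congruence| | |]; reflexivity
      | apply mh_left; reflexivity | apply md_left with (J' := S (2 * j)); lia | ].
    edestruct (step_noact w c2) as (c3 & Hs3 & Hg3);
      [exact Hg2 | reflexivity | reflexivity | apply mh_stay | apply md_left with (J' := 2 * j); lia | ].
    destruct (IH c3 Mk E Hg3) as (c' & Hs' & Hg').
    exists c'; split; auto. replace (2 * S j + 2) with (S (S (2 * j + 2))) by lia.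
    eapply steps_S; [eauto|]. eapply steps_S; eauto.
Qed.

Section Main.
Variables (w : list sym) (p q : nat).
Hypothesis Hw : w = repeat sa p ++ repeat sb q ++ [].

Definition Sm (r c m : nat) : bool :=
  ((1 <=? m) && (m <=? r)) || ((p + q - c <? m) && (m <=? p + q)).
Definition Em (r c m : nat) : nat :=
  if Sm r c m then 1 else if (1 <=? m) && (m <=? p) then 2 else 0.
Definition gd cf x h J r c := good cf x h J (Sm r c) (Em r c).

Ltac msolve := unfold gd, Em, Sm; intros; bdestr.

Lemma lw : length w = p + q.
Proof. rewrite (len_w _ _ _ _ Hw). simpl. lia. Qed.

Lemma tp_a m : 1 <= m <= p -> tape w m = Sym sa.
Proof. apply (tape_a _ _ _ _ Hw). Qed.
Lemma tp_b m : p < m <= p + q -> tape w m = Sym sb.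
Proof. apply (tape_b _ _ _ _ Hw). Qed.
Lemma tp_e : tape w (p + q + 1) = REnd.
Proof. apply (tape_end _ _ _ _ Hw). Qed.

Lemma out_m cf x h m r c : gd cf x h (2 * m) r c -> m <= p + q + 1 ->
  output (length w) cf = Sm r c m.
Proof. intros Hg Hm. eapply output_at; [exact Hg|]. rewrite lw. lia. Qed.

Lemma gd_cons cf x hd J r c h : r <= p -> c < q -> h = p + q - c ->
  good cf x hd J (fun m => if Nat.eqb m h then negb (Sm r c h) else Sm r c m)
                (fun m => if Nat.eqb m h then S (Em r c h) else Em r c m) ->
  gd cf x hd J r (S c).
Proof.
  intros Hr Hc Hh Hg. subst h. eapply good_ext; [exact Hg| |]; msolve.
Qed.

Lemma gd_off cf x h J r c : 1 <= r <= p -> c <= q ->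
  good cf x h J (fun m => if Nat.eqb m r then negb (Sm r c r) else Sm r c m)
                (fun m => if Nat.eqb m r then S (Em r c r) else Em r c m) ->
  gd cf x h J (r - 1) c.
Proof.
  intros Hr Hc Hg. eapply good_ext; [exact Hg| |]; msolve.
Qed.

Lemma Em_b r c : r <= p -> c < q -> Em r c (p + q - c) <= 1.
Proof. msolve. Qed.
Lemma Em_a r c : 1 <= r <= p -> c <= q -> Em r c r <= 1.
Proof. msolve. Qed.


Lemma L_B r c : r <= p -> c <= q -> forall d j cf, j + d = p + q - c + 1 -> 1 <= j ->
  gd cf qBw j (2 * j) r c ->
  exists cf', steps w cf (2 * d + 2) = Some cf' /\ gd cf' qX (p + q - c) (2 * (p + q - c)) r c.
Proof.
  intros Hr Hc. pose proof lw as Hl.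
  induction d as [|d IH]; intros j cf Hd Hj Hg.
  - assert (Hdl : dl qBw (tape w j) (Sm r c j) = (qBl, HLeft, DLeft, NoAct)).
    { destruct (Nat.eq_dec c 0) as [->|Hc0].
      - replace j with (p + q + 1) by lia. rewrite tp_e. reflexivity.
      - rewrite tp_b by lia. replace (Sm r c j) with true by msolve. reflexivity. }
    edestruct (step_noact w cf) as (c2 & Hs2 & Hg2);
      [exact Hg | reflexivity | rewrite (out_m _ _ _ j r c Hg) by lia; exact Hdl
      | apply mh_left with (h' := p + q - c); lia
      | apply md_left with (J' := S (2 * (p + q - c))); lia | ].
    edestruct (step_noact w c2) as (c3 & Hs3 & Hg3);
      [exact Hg2 | reflexivity | reflexivity | apply mh_stay
      | apply md_left with (J' := 2 * (p + q - c)); lia | ].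
    exists c3; split; auto. eapply steps_S; [eauto|]. eapply steps_S; [eauto|]. reflexivity.
  - assert (Hdl : dl qBw (tape w j) (Sm r c j) = (qBwh, HRight, DRight, NoAct)).
    { destruct (le_lt_dec j p).
      - rewrite tp_a by lia. reflexivity.
      - rewrite tp_b by lia. replace (Sm r c j) with false by msolve. reflexivity. }
    edestruct (step_noact w cf) as (c2 & Hs2 & Hg2);
      [exact Hg | reflexivity | rewrite (out_m _ _ _ j r c Hg) by lia; exact Hdl
      | apply mh_right; lia | apply md_right; lia | ].
    edestruct (step_noact w c2) as (c3 & Hs3 & Hg3);
      [exact Hg2 | reflexivity | reflexivity | apply mh_stay | apply md_right; lia | ].
    replace (S (S (2 * j))) with (2 * S j) in Hg3 by lia.
    destruct (IH (S j) c3) as (cf' & Hs' & Hg'); [lia|lia|exact Hg3|].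
    exists cf'; split; auto. replace (2 * S d + 2) with (S (S (2 * d + 2))) by lia.
    eapply steps_S; [eauto|]. eapply steps_S; eauto.
Qed.


Lemma L_Sk R c : 1 <= R <= p -> c < q -> forall d j cf, j = R + d -> j <= p + q - c ->
  gd cf qSk (p + q - c) (2 * j) R c ->
  exists cf', steps w cf (2 * d) = Some cf' /\ gd cf' qSk (p + q - c) (2 * R) R c.
Proof.
  intros Hr Hc. pose proof lw as Hl.
  induction d as [|d IH]; intros j cf Hd Hj Hg.
  - exists cf; split; [reflexivity|]. subst j. replace (R + 0) with R in Hg by lia. exact Hg.
  - edestruct (step_noact w cf) as (c2 & Hs2 & Hg2);
      [exact Hg | reflexivity
      | rewrite (out_m _ _ _ j R c Hg) by lia; replace (Sm R c j) with false by msolve; reflexivity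
      | apply mh_stay | apply md_left with (J' := S (2 * (j - 1))); lia | ].
    edestruct (step_noact w c2) as (c3 & Hs3 & Hg3);
      [exact Hg2 | reflexivity | reflexivity | apply mh_stay
      | apply md_left with (J' := 2 * (j - 1)); lia | ].
    destruct (IH (j - 1) c3) as (cf' & Hs' & Hg'); [lia|lia|exact Hg3|].
    exists cf'; split; auto. replace (2 * S d) with (S (S (2 * d))) by lia.
    eapply steps_S; [eauto|]. eapply steps_S; eauto.
Qed.

Lemma L_cons1 R c cf : 1 <= R <= p -> c < q ->
  gd cf qSk (p + q - c) (2 * R) R c ->
  exists cf', steps w cf 3 = Some cf' /\ gd cf' qCc (p + q - S c) (2 * (R - 1)) R (S c).
Proof.
  intros Hr Hc Hg. pose proof lw as Hl.
  edestruct (step_tog w cf) as (c2 & Hs2 & Hg2);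
    [exact Hg | reflexivity
    | rewrite (out_m _ _ _ R R c Hg) by lia; replace (Sm R c R) with true by msolve;
      rewrite tp_b by lia; reflexivity
    | apply mh_left with (h' := p + q - S c); lia | apply md_stay | lia | apply Em_b; lia | ].
  apply gd_cons in Hg2; [|lia|lia|reflexivity].
  edestruct (step_noact w c2) as (c3 & Hs3 & Hg3);
    [exact Hg2 | reflexivity | reflexivity | apply mh_stay
    | apply md_left with (J' := S (2 * (R - 1))); lia | ].
  edestruct (step_noact w c3) as (c4 & Hs4 & Hg4);
    [exact Hg3 | reflexivity | reflexivity | apply mh_stay
    | apply md_left with (J' := 2 * (R - 1)); lia | ].
  exists c4; split; auto.
  eapply steps_S; [eauto|]. eapply steps_S; [eauto|]. eapply steps_S; [eauto|]. reflexivity.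
Qed.

Definition Rejd (cf : config Mach) := st cf = qRej /\ no_final_crash cf.

Lemma L_C R : 1 <= R <= p -> forall j c' cf, j < R -> c' <= q ->
  gd cf qCc (p + q - c') (2 * j) R c' ->
  (c' + 2 * j <= q -> exists t cf', t <= 4 * j + 1 /\ steps w cf t = Some cf' /\
      gd cf' qDd (p + q - (c' + 2 * j)) 0 R (c' + 2 * j)) /\
  (q < c' + 2 * j -> exists t cf', t <= 4 * j + 1 /\ steps w cf t = Some cf' /\ Rejd cf').
Proof.
  intros Hr. pose proof lw as Hl.
  induction j as [|j IH]; intros c' cf Hj Hc Hg.
  - split; [|intros; lia]. intros _.
    edestruct (step_noact w cf) as (c2 & Hs2 & Hg2);
      [exact Hg | reflexivity
      | rewrite (out_m _ _ _ 0 R c' Hg) by lia; replace (Sm R c' 0) with false by msolve; reflexivity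
      | apply mh_stay | apply md_stay | ].
    exists 1, c2. split; [lia|]. split; [eapply steps_S; [eauto|reflexivity]|].
    replace (c' + 2 * 0) with c' by lia. exact Hg2.
  - assert (Ho : output (length w) cf = true).
    { rewrite (out_m _ _ _ (S j) R c' Hg) by lia. msolve. }
    destruct (Nat.eq_dec c' q) as [Heq|Hlt].
    + split; [intros; lia|]. intros _.
      edestruct (step_noact w cf) as (c2 & Hs2 & Hg2);
        [exact Hg | reflexivity
        | rewrite Ho; rewrite tp_a by lia; reflexivity
        | apply mh_stay | apply md_stay | ].
      exists 1, c2. split; [lia|]. split; [eapply steps_S; [eauto|reflexivity]|].
      split; [apply Hg2|]. eapply good_nfc; eauto.
    + edestruct (step_tog w cf) as (c2 & Hs2 & Hg2);
        [exact Hg | reflexivity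
        | rewrite Ho; rewrite tp_b by lia; reflexivity
        | apply mh_left with (h' := p + q - S c'); lia | apply md_stay | lia | apply Em_b; lia | ].
      apply gd_cons in Hg2; [|lia|lia|reflexivity].
      destruct (Nat.eq_dec (S c') q) as [Heq2|Hlt2].
      * split; [intros; lia|]. intros _.
        edestruct (step_noact w c2) as (c3 & Hs3 & Hg3);
          [exact Hg2 | reflexivity
          | rewrite tp_a by lia; reflexivity
          | apply mh_stay | apply md_stay | ].
        exists 2, c3. split; [lia|].
        split; [eapply steps_S; [eauto|]; eapply steps_S; [eauto|reflexivity]|].
        split; [apply Hg3|]. eapply good_nfc; eauto.
      * edestruct (step_tog w c2) as (c3 & Hs3 & Hg3);
          [exact Hg2 | reflexivity
          | rewrite tp_b by lia; reflexivity
          | apply mh_left with (h' := p + q - S (S c')); lia | apply md_stay | lia | apply Em_b; lia | ].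
        apply gd_cons in Hg3; [|lia|lia|reflexivity].
        edestruct (step_noact w c3) as (c4 & Hs4 & Hg4);
          [exact Hg3 | reflexivity | reflexivity | apply mh_stay
          | apply md_left with (J' := S (2 * j)); lia | ].
        edestruct (step_noact w c4) as (c5 & Hs5 & Hg5);
          [exact Hg4 | reflexivity | reflexivity | apply mh_stay
          | apply md_left with (J' := 2 * j); lia | ].
        assert (H4 : steps w cf 4 = Some c5).
        { eapply steps_S; [eauto|]. eapply steps_S; [eauto|].
          eapply steps_S; [eauto|]. eapply steps_S; [eauto|]. reflexivity. }
        destruct (IH (S (S c')) c5) as [IH1 IH2]; [lia|lia|exact Hg5|].
        split.
        -- intros Hle. destruct IH1 as (t & cf' & Ht & Hs' & Hg'); [lia|].
           exists (4 + t), cf'. split; [lia|]. split; [eapply steps_add; eauto|].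
           replace (c' + 2 * S j) with (S (S c') + 2 * j) by lia. exact Hg'.
        -- intros Hgt. destruct (le_lt_dec (S (S c') + 2 * j) q) as [Hle|Hgt2]; [lia|].
           destruct (IH2 Hgt2) as (t & cf' & Ht & Hs' & Hg').
           exists (4 + t), cf'. split; [lia|]. split; [eapply steps_add; eauto|]. exact Hg'.
Qed.


Lemma L_E R c : 1 <= R <= p -> c <= q -> forall d j cf, j + d = R + 1 -> 1 <= j ->
  gd cf qEw j (2 * j) R c ->
  exists cf', steps w cf (2 * d + 2) = Some cf' /\ gd cf' qTt R (2 * R) R c.
Proof.
  intros Hr Hc. pose proof lw as Hl.
  induction d as [|d IH]; intros j cf Hd Hj Hg.
  - assert (Hdl : dl qEw (tape w j) (Sm R c j) = (qEl, HLeft, DLeft, NoAct)).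
    { destruct (le_lt_dec j p).
      - rewrite tp_a by lia. replace (Sm R c j) with false by msolve. reflexivity.
      - destruct (Nat.eq_dec q 0).
        + replace j with (p + q + 1) by lia. rewrite tp_e. reflexivity.
        + rewrite tp_b by lia. reflexivity. }
    edestruct (step_noact w cf) as (c2 & Hs2 & Hg2);
      [exact Hg | reflexivity | rewrite (out_m _ _ _ j R c Hg) by lia; exact Hdl
      | apply mh_left with (h' := R); lia
      | apply md_left with (J' := S (2 * R)); lia | ].
    edestruct (step_noact w c2) as (c3 & Hs3 & Hg3);
      [exact Hg2 | reflexivity | reflexivity | apply mh_stay
      | apply md_left with (J' := 2 * R); lia | ].
    exists c3; split; auto. eapply steps_S; [eauto|]. eapply steps_S; [eauto|]. reflexivity.
  - assert (Hdl : dl qEw (tape w j) (Sm R c j) = (qEh, HRight, DRight, NoAct)).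
    { rewrite tp_a by lia. replace (Sm R c j) with true by msolve. reflexivity. }
    edestruct (step_noact w cf) as (c2 & Hs2 & Hg2);
      [exact Hg | reflexivity | rewrite (out_m _ _ _ j R c Hg) by lia; exact Hdl
      | apply mh_right; lia | apply md_right; lia | ].
    edestruct (step_noact w c2) as (c3 & Hs3 & Hg3);
      [exact Hg2 | reflexivity | reflexivity | apply mh_stay | apply md_right; lia | ].
    replace (S (S (2 * j))) with (2 * S j) in Hg3 by lia.
    destruct (IH (S j) c3) as (cf' & Hs' & Hg'); [lia|lia|exact Hg3|].
    exists cf'; split; auto. replace (2 * S d + 2) with (S (S (2 * d + 2))) by lia.
    eapply steps_S; [eauto|]. eapply steps_S; eauto.
Qed.

Lemma L_T R c cf : 1 <= R <= p -> c <= q -> gd cf qTt R (2 * R) R c ->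
  exists cf', steps w cf 2 = Some cf' /\ gd cf' qGw (R - 1) (2 * (R - 1)) (R - 1) c.
Proof.
  intros Hr Hc Hg. pose proof lw as Hl.
  edestruct (step_tog w cf) as (c2 & Hs2 & Hg2);
    [exact Hg | reflexivity | reflexivity
    | apply mh_left with (h' := R - 1); lia
    | apply md_left with (J' := S (2 * (R - 1))); lia | lia | apply Em_a; lia | ].
  apply gd_off in Hg2; [|lia|lia].
  edestruct (step_noact w c2) as (c3 & Hs3 & Hg3);
    [exact Hg2 | reflexivity | reflexivity | apply mh_stay
    | apply md_left with (J' := 2 * (R - 1)); lia | ].
  exists c3; split; auto. eapply steps_S; [eauto|]. eapply steps_S; [eauto|]. reflexivity.
Qed.

Lemma L_round R c cf : 1 <= R <= p -> c <= q -> gd cf qR1 1 2 R c ->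
  (c + 2 * R - 1 <= q -> exists t cf', t <= 20 * (p + q + 2) /\ steps w cf t = Some cf' /\
      gd cf' qR1 1 2 (R - 1) (c + 2 * R - 1)) /\
  (q < c + 2 * R - 1 -> exists t cf', t <= 20 * (p + q + 2) /\ steps w cf t = Some cf' /\ Rejd cf').
Proof.
  intros Hr Hc Hg. pose proof lw as Hl.
  edestruct (step_noact w cf) as (c1 & Hs1 & Hg1);
    [exact Hg | reflexivity
    | rewrite (out_m _ _ _ 1 R c Hg) by lia; replace (Sm R c 1) with true by msolve; reflexivity
    | apply mh_stay | apply md_stay | ].
  destruct (L_B R c ltac:(lia) Hc (p + q - c) 1 c1) as (c2 & Hs2 & Hg2); [lia|lia|exact Hg1|].
  assert (H02 : steps w cf (1 + (2 * (p + q - c) + 2)) = Some c2) by (eapply steps_S; eauto).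
  destruct (Nat.eq_dec c q) as [Heq|Hlt].
  - split; [intros; lia|]. intros _.
    edestruct (step_noact w c2) as (c3 & Hs3 & Hg3);
      [exact Hg2 | reflexivity | rewrite tp_a by lia; reflexivity | apply mh_stay | apply md_stay | ].
    exists (1 + (2 * (p + q - c) + 2) + 1), c3. split; [lia|].
    split; [eapply steps_add; [eauto|]; eapply steps_S; [eauto|reflexivity]|].
    split; [apply Hg3|]. eapply good_nfc; eauto.
  - edestruct (step_noact w c2) as (c3 & Hs3 & Hg3);
      [exact Hg2 | reflexivity | rewrite tp_b by lia; reflexivity | apply mh_stay | apply md_stay | ].
    destruct (L_Sk R c ltac:(lia) ltac:(lia) (p + q - c - R) (p + q - c) c3) as (c4 & Hs4 & Hg4);
      [lia|lia| exact Hg3|].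
    destruct (L_cons1 R c c4 ltac:(lia) ltac:(lia) Hg4) as (c5 & Hs5 & Hg5).
    assert (H05 : steps w cf (1 + (2 * (p + q - c) + 2) + 1 + 2 * (p + q - c - R) + 3) = Some c5).
    { eapply steps_add; [|eauto]. eapply steps_add; [|eauto].
      eapply steps_add; [eauto|]. eapply steps_S; [eauto|reflexivity]. }
    destruct (L_C R ltac:(lia) (R - 1) (S c) c5) as [C1 C2]; [lia|lia|exact Hg5|].
    split.
    + intros Hle. destruct C1 as (t6 & c6 & Ht6 & Hs6 & Hg6); [lia|].
      destruct (ph_D w _ c6 _ _ Hg6) as (c7 & Hs7 & Hg7).
      destruct (L_E R (S c + 2 * (R - 1)) ltac:(lia) ltac:(lia) R 1 c7) as (c8 & Hs8 & Hg8);
        [lia|lia|exact Hg7|].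
      destruct (L_T R (S c + 2 * (R - 1)) c8 ltac:(lia) ltac:(lia) Hg8) as (c9 & Hs9 & Hg9).
      destruct (ph_G w _ c9 _ _ Hg9) as (c10 & Hs10 & Hg10).
      eexists; exists c10. split; [|split].
      2:{ eapply steps_add; [exact H05|]. eapply steps_add; [exact Hs6|].
          eapply steps_add; [exact Hs7|]. eapply steps_add; [exact Hs8|].
          eapply steps_add; [exact Hs9|]. exact Hs10. }
      * lia.
      * replace (c + 2 * R - 1) with (S c + 2 * (R - 1)) by lia. exact Hg10.
    + intros Hgt. destruct C2 as (t6 & c6 & Ht6 & Hs6 & Hg6); [lia|].
      eexists; exists c6. split; [|split; [eapply steps_add; [exact H05|exact Hs6]|exact Hg6]].
      lia.
Qed.


Lemma L_F c : c <= q -> forall d j cf, j + d = p + q + 1 -> 1 <= j ->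
  gd cf qFw j (2 * j) 0 c -> (c < q -> j <= p + q - c) ->
  exists t cf', t <= 2 * d + 1 /\ steps w cf t = Some cf' /\
    (c = q -> st cf' = qAcc /\ output (length w) cf' = false /\ no_final_crash cf') /\
    (c < q -> Rejd cf').
Proof.
  intros Hc. pose proof lw as Hl.
  induction d as [|d IH]; intros j cf Hd Hj Hg Hpre.
  - edestruct (step_noact w cf) as (c2 & Hs2 & Hg2);
      [exact Hg | reflexivity | replace j with (p + q + 1) by lia; rewrite tp_e; reflexivity
      | apply mh_stay | apply md_stay | ].
    exists 1, c2. split; [lia|]. split; [eapply steps_S; [eauto|reflexivity]|].
    split; [|intros; lia]. intros _. split; [apply Hg2|]. split; [|eapply good_nfc; eauto].
    rewrite (out_m _ _ _ j 0 c Hg2) by lia. msolve.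
  - destruct (le_lt_dec j p) as [Hjp|Hjp].
    + edestruct (step_noact w cf) as (c2 & Hs2 & Hg2);
        [exact Hg | reflexivity | rewrite tp_a by lia; reflexivity
        | apply mh_right; lia | apply md_right; lia | ].
      edestruct (step_noact w c2) as (c3 & Hs3 & Hg3);
        [exact Hg2 | reflexivity | reflexivity | apply mh_stay | apply md_right; lia | ].
      replace (S (S (2 * j))) with (2 * S j) in Hg3 by lia.
      destruct (IH (S j) c3) as (t & cf' & Ht & Hs' & H'); [lia|lia|exact Hg3|lia|].
      exists (S (S t)), cf'. split; [lia|]. split; [|exact H'].
      eapply steps_S; [eauto|]. eapply steps_S; eauto.
    + destruct (Sm 0 c j) eqn:Esm.
      * edestruct (step_noact w cf) as (c2 & Hs2 & Hg2);
          [exact Hg | reflexivity | rewrite (out_m _ _ _ j 0 c Hg) by lia; rewrite Esm;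
            rewrite tp_b by lia; reflexivity
          | apply mh_right; lia | apply md_right; lia | ].
        edestruct (step_noact w c2) as (c3 & Hs3 & Hg3);
          [exact Hg2 | reflexivity | reflexivity | apply mh_stay | apply md_right; lia | ].
        replace (S (S (2 * j))) with (2 * S j) in Hg3 by lia.
        assert (Hjc : p + q - c < j). { revert Esm. unfold Sm. bdestr. }
        destruct (IH (S j) c3) as (t & cf' & Ht & Hs' & H'); [lia|lia|exact Hg3|lia|].
        exists (S (S t)), cf'. split; [lia|]. split; [|exact H'].
        eapply steps_S; [eauto|]. eapply steps_S; eauto.
      * assert (Hjc : c < q) by (revert Esm; unfold Sm; bdestr).
        edestruct (step_noact w cf) as (c2 & Hs2 & Hg2);
          [exact Hg | reflexivity | rewrite (out_m _ _ _ j 0 c Hg) by lia; rewrite Esm;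
            rewrite tp_b by lia; reflexivity
          | apply mh_stay | apply md_stay | ].
        exists 1, c2. split; [lia|]. split; [eapply steps_S; [eauto|reflexivity]|].
        split; [intros; lia|]. intros _. split; [apply Hg2|]. eapply good_nfc; eauto.
Qed.

Lemma L_loop : forall rr c cf, rr <= p -> c <= q -> c + rr * rr = p * p -> gd cf qR1 1 2 rr c ->
  exists t cf', t <= (rr + 1) * (20 * (p + q + 2)) /\ steps w cf t = Some cf' /\
    (q = p * p -> st cf' = qAcc /\ output (length w) cf' = false /\ no_final_crash cf') /\
    (q <> p * p -> Rejd cf').
Proof.
  pose proof lw as Hl.
  induction rr as [|rr IH]; intros c cf Hr Hc Hcr Hg.
  - assert (Hp0 : p = 0 -> c = 0) by (intros; subst; lia).
    edestruct (step_noact w cf) as (c1 & Hs1 & Hg1);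
      [exact Hg | reflexivity
      | rewrite (out_m _ _ _ 1 0 c Hg) by lia; replace (Sm 0 c 1) with false by
          (destruct (Nat.eq_dec p 0); [rewrite Hp0 by auto|]; msolve); reflexivity
      | apply mh_stay | apply md_stay | ].
    destruct (L_F c Hc (p + q) 1 c1) as (t & cf' & Ht & Hs' & HA & HR); [lia|lia|exact Hg1|lia|].
    exists (S t), cf'. split; [nia|]. split; [eapply steps_S; eauto|].
    split.
    + intros Hq. apply HA. lia.
    + intros Hq. apply HR. lia.
  - destruct (L_round (S rr) c cf ltac:(lia) Hc Hg) as [R1 R2].
    destruct (le_lt_dec (c + 2 * S rr - 1) q) as [Hle|Hgt].
    + destruct (R1 Hle) as (t1 & c1 & Ht1 & Hs1 & Hg1).
      replace (S rr - 1) with rr in Hg1 by lia.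
      destruct (IH (c + 2 * S rr - 1) c1) as (t2 & cf' & Ht2 & Hs2 & H2); [lia|lia|nia|exact Hg1|].
      exists (t1 + t2), cf'. split; [nia|]. split; [eapply steps_add; eauto|exact H2].
    + destruct (R2 Hgt) as (t1 & c1 & Ht1 & Hs1 & Hg1).
      exists t1, c1. split; [nia|]. split; auto. split; [|auto].
      intros Hq. exfalso. nia.
Qed.

End Main.

Lemma decomp w : exists p q v, w = repeat sa p ++ repeat sb q ++ v /\
  (v = [] \/ (1 <= q /\ exists v', v = sa :: v')).
Proof.
  induction w as [|x w IH].
  - exists 0, 0, []. simpl. auto.
  - destruct IH as (p & q & v & Hw & Hv). destruct x.
    + exists (S p), q, v. simpl. rewrite Hw. auto.
    + destruct p as [|p'].
      * exists 0, (S q), v. simpl in *. rewrite Hw. split; auto.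
        destruct Hv as [|(_ & Hv)]; auto. right; split; [lia|auto].
      * exists 0, 1, w. simpl. split; auto. right; split; auto.
        rewrite Hw. simpl. eauto.
Qed.

Fixpoint onlyb (l : list sym) : bool :=
  match l with [] => true | sb :: l' => onlyb l' | sa :: _ => false end.
Fixpoint isab (l : list sym) : bool :=
  match l with [] => true | sa :: l' => isab l' | sb :: l' => onlyb l' end.

Lemma onlyb_rep m : onlyb (repeat sb m) = true.
Proof. induction m; simpl; auto. Qed.
Lemma isab_L k m : isab (repeat sa k ++ repeat sb m) = true.
Proof. induction k; simpl; auto. destruct m; simpl; auto. apply onlyb_rep. Qed.
Lemma onlyb_bad q v' : onlyb (repeat sb q ++ sa :: v') = false.
Proof. induction q; simpl; auto. Qed.
Lemma isab_bad p q v' : 1 <= q -> isab (repeat sa p ++ repeat sb q ++ sa :: v') = false.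
Proof.
  intros Hq. induction p; simpl; auto. destruct q; [lia|]. simpl. apply onlyb_bad.
Qed.

Fixpoint numa (l : list sym) : nat :=
  match l with [] => 0 | sa :: l' => S (numa l') | sb :: l' => numa l' end.
Lemma numa_ab k m : numa (repeat sa k ++ repeat sb m) = k.
Proof. induction k; simpl; auto. induction m; simpl; auto. Qed.

Lemma ab_inj p q k m : repeat sa p ++ repeat sb q = repeat sa k ++ repeat sb m -> p = k /\ q = m.
Proof.
  intros H. assert (p = k) by (rewrite <- (numa_ab p q), <- (numa_ab k m), H; reflexivity).
  split; auto. apply (f_equal (@length sym)) in H. rewrite !length_app, !repeat_length in H. lia.
Qed.

Lemma run_all w : exists t cf, run_steps Mach w t = Some cf /\ halted cf = true /\
  t <= 2 * length w + 6 + 20 * (length w + 1) * (length w + 2) /\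
  (L_anbn2 w -> no_final_crash cf /\ acc Mach (st cf) = true /\ output (length w) cf = false) /\
  (~ L_anbn2 w -> no_final_crash cf /\ (acc Mach (st cf) = false \/ output (length w) cf = true)).
Proof.
  destruct (decomp w) as (p & q & v & Hw & Hv).
  destruct (init_good w) as (c0 & H0 & Hg0).
  destruct (phase1 w p q v Hw Hv c0 Hg0) as [A B].
  pose proof (len_w _ _ _ _ Hw) as Hl.
  destruct v as [|y v'].
  - destruct (A eq_refl) as (t1 & c1 & Ht1 & Hs1 & Hg1).
    assert (Hg1' : gd p q c1 qR1 1 2 p 0).
    { eapply good_ext; [exact Hg1| |]; unfold gd, Em, Sm, E1, S1; intros; bdestr. }
    destruct (L_loop w p q Hw p 0 c1 ltac:(lia) ltac:(lia) ltac:(lia) Hg1')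
      as (t2 & cf & Ht2 & Hs2 & HA & HR).
    assert (HL : L_anbn2 w <-> q = p * p).
    { unfold L_anbn2. rewrite app_nil_r in Hw. split.
      - intros (k & Hk). rewrite Hw in Hk. apply ab_inj in Hk. destruct Hk; subst; auto.
      - intros ->. exists p. exact Hw. }
    exists (0 + (t1 + t2)), cf. split.
    { eapply run_steps_add; [exact H0|]. eapply steps_add; eauto. }
    assert (Hh : st cf = qAcc \/ st cf = qRej).
    { destruct (Nat.eq_dec q (p * p)) as [e|e]; [left; apply HA; auto|right; apply HR; auto]. }
    split; [unfold halted; destruct Hh as [Hh|Hh]; rewrite Hh; reflexivity|].
    split; [simpl in Hl; rewrite Hl; nia|].
    split.
    + intros HLw. apply HL in HLw. destruct (HA HLw) as (Ha & Ho & Hn).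
      split; auto. split; auto. rewrite Ha. reflexivity.
    + intros HLw. assert (Hq : q <> p * p) by (intro e; apply HLw, HL, e).
      destruct (HR Hq) as (Hr & Hn). split; auto. left. rewrite Hr. reflexivity.
  - destruct (B ltac:(discriminate)) as (t1 & c1 & Ht1 & Hs1 & Hr & Hn).
    destruct Hv as [|(Hq & v'' & Hv)]; [discriminate|].
    assert (HnL : ~ L_anbn2 w).
    { intros (k & Hk). rewrite Hw, Hv in Hk. pose proof (isab_L k (k * k)) as I1.
      rewrite <- Hk, isab_bad in I1 by auto. discriminate. }
    exists (0 + t1), c1. split; [eapply run_steps_add; eauto|].
    split; [unfold halted; rewrite Hr; reflexivity|].
    split; [simpl in Hl; rewrite Hl; nia|].
    split; [intros; contradiction|].
    intros _. split; auto. left. rewrite Hr. reflexivity.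
Qed.

Theorem theorem6 :
  exists M : OIA,
    recognizes M L_anbn2 /\
    exists C N : nat, forall w : list sym,
      N <= length w -> runs_within M w (C * length w ^ 3).
Proof.
  exists Mach. split.
  - intros w. destruct (run_all w) as (t & cf & Hs & Hh & Ht & HA & HR). split.
    + intros HL. destruct (HA HL) as (Hn & Ha & Ho). exists cf. split; [exists t; auto|auto].
    + intros HL. destruct (HR HL) as (Hn & Hx). exists cf. split; [exists t; auto|auto].
  - exists 256, 1. intros w Hw. destruct (run_all w) as (t & cf & Hs & Hh & Ht & _).
    exists cf. split; [exists t; auto|].
    pose proof (run_time w t cf Hs) as Htm.
    set (n := length w) in *. simpl. nia.
Qed.
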